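(* Let $S$ be an irreducible constraint over an alphabet $\Sigma$, let $\{\Sigma_0,\Sigma_1\}$ be a partition of $\Sigma$, and let $n_0,n_1,r$ be positive integers. There exists a deterministic $(S,n_0,n_1)$-VLE whose edges all have length at most $r$ if and only if $S$ is presented by an irreducible deterministic VLG $H=(V,E,L)$ whose edges all have length at most $r$ and such that $V$ contains a subset of principal states with respect to $(n_0,n_1)$.
   Context: A constraint over $\Sigma$ is the set of all words generated (by reading edge labels) along finite paths of some finite directed graph with edges labeled by symbols of $\Sigma$; it is irreducible if it can be presented by a deterministic (no two outgoing edges of a state share a label) strongly connected such graph. A variable-length graph (VLG) $H=(V,E,L)$ is a finite directed multigraph whose edges are labeled by nonempty finite words over $\Sigma$; the length of an edge is the length of its label. The constraint $S(H)$ presented by $H$ is the set of all consecutive sub-words of words obtained by concatenating labels along finite paths of $H$. $H$ is deterministic if for each state the labels of its outgoing edges form a prefix-free list (no label is a prefix of any other label in the list); irreducible if strongly connected; lossless if no two distinct paths with the same initial and terminal state generate the same word. A word over $\Sigma$ is even/odd according to the parity of the number of its symbols in $\Sigma_1$. For integers $n,\ell>0$ and a finite-support integer sequence $\mu$, $\mathsf{K}_\ell(\mu,n)=n^\ell-\sum_{i=1}^{\ell}\mu_i n^{\ell-i}$ (with $0^0=1$). For a pair $(\eta,\omega)$ of finite-support nonnegative integer sequences, put $\mathsf{K}^\pm_\ell=\mathsf{K}_\ell(\eta\pm\omega,n_0\pm n_1)$, let $\mathsf{r}$ be the largest index in the union of their supports (take $\mathsf{r}=0$ if both are zero), and $\mathsf{K}^\pm=\mathsf{K}^\pm_{\mathsf{r}}$.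 An $(S,n_0,n_1)$-VLE is a VLG $\mathcal{E}$ such that: (E1) $\mathcal{E}$ is lossless; (E2) $S(\mathcal{E})\subseteq S$; and, for each state $u$, letting $\eta_\ell(u)$ (resp. $\omega_\ell(u)$) be the number of outgoing edges of $u$ of length $\ell$ with even (resp. odd) label and computing the quantities above for $(\eta(u),\omega(u))$: (E3) $\sum_{\ell\ge1}(\eta_\ell(u)+\omega_\ell(u))/(n_0+n_1)^\ell=1$; (E4) $\mathsf{K}^+_\ell(u)\ge|\mathsf{K}^-_\ell(u)|$ for every $\ell\ge1$. A nonempty subset $V'\subseteq V$ of a VLG $H$ is a set of principal states with respect to $(n_0,n_1)$ if, for every $u\in V'$, letting $(\eta(u|V'),\omega(u|V'))$ be the even/odd length distribution of the labels of the outgoing edges of $u$ in the subgraph of $H$ induced by $V'$ (edges with both endpoints in $V'$), and $\mathsf{K}^\pm_\ell(u),\mathsf{K}^\pm(u),\mathsf{r}(u)$ the corresponding quantities, one has $\mathsf{K}^+(u)\le-|\mathsf{K}^-(u)|$ and $\mathsf{K}^+_\ell(u)\ge|\mathsf{K}^-_\ell(u)|$ for $\ell=1,\dots,\mathsf{r}(u)-1$. *)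

(* Defs.v *)
From mathcomp Require Import all_boot all_order all_algebra.
Set Implicit Arguments. Unset Strict Implicit. Unset Printing Implicit Defensive.
Import Order.TTheory GRing.Theory Num.Theory.

Section Defs.
Variable Sigma : finType.

Record lgraph := LGraph {
  gst : finType;
  ged : finType;
  gsrc : ged -> gst;
  gdst : ged -> gst;
  glab : ged -> Sigma;
  gst_nonempty : 0 < #|gst|
}.

Fixpoint gpath (G : lgraph) (u : gst G) (p : seq (ged G)) : bool :=
  match p with
  | [::] => true
  | e :: p' => (gsrc e == u) && gpath (gdst e) p'
  end.

Definition gend (G : lgraph) (u : gst G) (p : seq (ged G)) : gst G :=
  last u (map (@gdst G) p).

Definition gdeterministic (G : lgraph) : Prop :=
  forall e e' : ged G, e != e' -> gsrc e = gsrc e' -> glab e <> glab e'.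

Definition gstrongly_connected (G : lgraph) : Prop :=
  forall u v : gst G, exists p, gpath u p /\ gend u p = v.

Definition gpresents (G : lgraph) (S : seq Sigma -> Prop) : Prop :=
  forall w, S w <-> exists (u : gst G) p, gpath u p /\ w = map (@glab G) p.

Definition irreducible_constraint (S : seq Sigma -> Prop) : Prop :=
  exists G : lgraph, [/\ gdeterministic G, gstrongly_connected G & gpresents G S].

Record vlg := VLG {
  vst : finType;
  ved : finType;
  vsrc : ved -> vst;
  vdst : ved -> vst;
  vlab : ved -> seq Sigma;
  vlab_nonempty : forall e, vlab e != [::];
  vst_nonempty : 0 < #|vst|
}.

Fixpoint vpath (H : vlg) (u : vst H) (p : seq (ved H)) : bool :=
  match p with
  | [::] => true
  | e :: p' => (vsrc e == u) && vpath (vdst e) p'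
  end.

Definition vend (H : vlg) (u : vst H) (p : seq (ved H)) : vst H :=
  last u (map (@vdst H) p).

Definition vword (H : vlg) (p : seq (ved H)) : seq Sigma :=
  flatten (map (@vlab H) p).

Definition inSH (H : vlg) (w : seq Sigma) : Prop :=
  exists (u : vst H) p, vpath u p /\ infix w (vword p).

Definition vpresents (H : vlg) (S : seq Sigma -> Prop) : Prop :=
  forall w, S w <-> inSH H w.

Definition vdeterministic (H : vlg) : Prop :=
  forall e e' : ved H, e != e' -> vsrc e = vsrc e' -> ~~ prefix (vlab e) (vlab e').

Definition virreducible (H : vlg) : Prop :=
  forall u v : vst H, exists p, vpath u p /\ vend u p = v.

Definition lossless (H : vlg) : Prop :=
  forall (u : vst H) (p q : seq (ved H)),
    vpath u p -> vpath u q -> vend u p = vend u q -> vword p = vword q -> p = q.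

Definition max_len (H : vlg) (r : nat) : Prop :=
  forall e : ved H, size (vlab e) <= r.

Definition odd_word (S1 : {set Sigma}) (w : seq Sigma) : bool :=
  odd (count (mem S1) w).

Definition eta_of (S1 : {set Sigma}) (s : seq (seq Sigma)) (l : nat) : nat :=
  count (fun w => (size w == l) && ~~ odd_word S1 w) s.
Definition omega_of (S1 : {set Sigma}) (s : seq (seq Sigma)) (l : nat) : nat :=
  count (fun w => (size w == l) && odd_word S1 w) s.

(* largest index in the union of the supports of eta and omega (0 if none) *)
Definition rr (s : seq (seq Sigma)) : nat := \max_(w <- s) size w.

Definition Kl (l : nat) (mu : nat -> int) (n : int) : int :=
  (n ^+ l - \sum_(1 <= i < l.+1) mu i * n ^+ (l - i)%N)%R.

Definition Kplus (S1 : {set Sigma}) (n0 n1 : nat) (s : seq (seq Sigma)) (l : nat) : int :=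
  Kl l (fun i => (Posz (eta_of S1 s i) + Posz (omega_of S1 s i))%R) (Posz n0 + Posz n1)%R.
Definition Kminus (S1 : {set Sigma}) (n0 n1 : nat) (s : seq (seq Sigma)) (l : nat) : int :=
  Kl l (fun i => (Posz (eta_of S1 s i) - Posz (omega_of S1 s i))%R) (Posz n0 - Posz n1)%R.

Definition out_labels (H : vlg) (u : vst H) : seq (seq Sigma) :=
  [seq vlab e | e <- enum (ved H) & vsrc e == u].

Definition induced_out_labels (H : vlg) (V' : {set vst H}) (u : vst H) : seq (seq Sigma) :=
  [seq vlab e | e <- enum (ved H) & [&& vsrc e == u, vsrc e \in V' & vdst e \in V']].

Definition is_VLE (S : seq Sigma -> Prop) (S1 : {set Sigma}) (n0 n1 : nat) (H : vlg) : Prop :=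
  [/\ lossless H,
      (forall w, inSH H w -> S w) &
      forall u : vst H, let s := out_labels u in
        (\sum_(1 <= l < (rr s).+1)
            ((eta_of S1 s l + omega_of S1 s l)%:R / ((n0 + n1)%:R ^+ l)) = 1 :> rat)%R
        /\ (forall l : nat, (1 <= l)%N -> (`|Kminus S1 n0 n1 s l| <= Kplus S1 n0 n1 s l)%R)].

Definition principal_states (S1 : {set Sigma}) (n0 n1 : nat) (H : vlg) (V' : {set vst H}) : Prop :=
  V' != set0 /\
  forall u, u \in V' ->
    let s := induced_out_labels V' u in
    (Kplus S1 n0 n1 s (rr s) <= - `|Kminus S1 n0 n1 s (rr s)|)%R /\
    (forall l : nat, (1 <= l < rr s)%N -> (`|Kminus S1 n0 n1 s l| <= Kplus S1 n0 n1 s l)%R).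

End Defs.

(* Main.v *)
Require Import Defs.
From mathcomp Require Import all_boot all_order all_algebra.
From mathcomp Require Import ring lra zify.
From Stdlib Require Import Classical.
Set Implicit Arguments. Unset Strict Implicit. Unset Printing Implicit Defensive.
Import Order.TTheory GRing.Theory Num.Theory.

Section Gen.
Variable Sigma : finType.

Lemma count_enum_card (T : finType) (q : pred T) : count q (enum T) = #|[pred x | q x]|.
Proof. by rewrite enumT cardE /enum_mem -size_filter; congr size; apply: eq_filter. Qed.

Lemma count_map_filter_enum (T : finType) (A : Type) (f : T -> A) (q : pred T) (P : pred A) :
  count P [seq f x | x <- enum T & q x] = #|[pred x | q x && P (f x)]|.
Proof.
rewrite count_map count_filter count_enum_card; apply: eq_card => x.
by rewrite !inE andbC.
Qed.

Lemma card_sig_pred (T : finType) (k : pred T) (Q : pred T) :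
  #|[pred e : {x | k x} | Q (val e)]| = #|[pred x | k x && Q x]|.
Proof.
rewrite -(card_image val_inj); apply: eq_card => x; rewrite !inE.
apply/imageP/andP => [[y]|[kx qx]].
  by rewrite inE => qy ->; split => //; apply: valP.
by exists (exist _ x kx).
Qed.

Lemma cat_prefix_total (T : eqType) (a b c d : seq T) :
  a ++ b = c ++ d -> prefix a c || prefix c a.
Proof.
move=> h; case: (leqP (size a) (size c)) => hs.
  apply/orP; left; rewrite prefixE.
  have := congr1 (take (size a)) h; rewrite take_size_cat // takel_cat //.
  by move=> <-.
apply/orP; right; rewrite prefixE.
have := congr1 (take (size c)) h; rewrite [in X in _ = X -> _]take_size_cat // takel_cat ?(ltnW hs) //.
by move=> ->.
Qed.

Lemma vpath_cat (H : vlg Sigma) (u : vst H) (p q : seq (ved H)) : vpath u (p ++ q) = vpath u p && vpath (vend u p) q.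
Proof. elim: p u => [|e p IH] u //=; by rewrite IH andbA. Qed.

Lemma vend_cat (H : vlg Sigma) (u : vst H) p q : vend u (p ++ q) = vend (vend u p) q.
Proof. by rewrite /vend map_cat last_cat. Qed.

Lemma vword_cat (H : vlg Sigma) (p q : seq (ved H)) : vword (p ++ q) = vword p ++ vword q.
Proof. by rewrite /vword map_cat flatten_cat. Qed.

Lemma vword_cons (H : vlg Sigma) (e : ved H) p : vword (e :: p) = vlab e ++ vword p.
Proof. by []. Qed.

Lemma det_lossless (H : vlg Sigma) : vdeterministic H -> lossless H.
Proof.
move=> hd u p q hp hq _ hw.
elim: p u q hp hq hw => [|e p IH] u [|e' q] //=.
- move=> _ _ /esym; rewrite vword_cons; case: (vlab e') (vlab_nonempty e') => //.
- move=> _ _; rewrite vword_cons; case: (vlab e) (vlab_nonempty e) => //.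
- move=> /andP[/eqP he hp] /andP[/eqP he' hq]; rewrite !vword_cons => hw.
  have ee : e = e'.
    apply/eqP/negPn/negP => ne.
    have := cat_prefix_total hw; rewrite (negbTE (hd _ _ ne _)); last by rewrite he he'.
    rewrite eq_sym in ne; by rewrite (negbTE (hd _ _ ne _)) //; rewrite he he'.
  subst e'; congr cons; apply: (IH (vdst e)) => //.
  by have := congr1 (drop (size (vlab e))) hw; rewrite !drop_size_cat.
Qed.

End Gen.


Section NumS.
Local Open Scope ring_scope.

Lemma Kl0 mu (n : int) : Kl 0 mu n = 1.
Proof. by rewrite /Kl big_geq // subr0 expr0. Qed.

Lemma KlS l mu (n : int) : Kl l.+1 mu n = n * Kl l mu n - mu l.+1.
Proof.
rewrite /Kl big_nat_recr //= subnn expr0 mulr1.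
rewrite (eq_big_nat _ _ (F2 := fun i => n * (mu i * n ^+ (l - i)))); last first.
  by move=> i /andP[_ hi]; rewrite subSn // exprS; ring.
rewrite -mulr_sumr exprS; ring.
Qed.

Lemma Kl_ext l (mu mu' : nat -> int) n :
  (forall i, (0 < i <= l)%N -> mu i = mu' i) -> Kl l mu n = Kl l mu' n.
Proof.
move=> h; rewrite /Kl; congr (_ - _); apply: eq_big_nat => i /andP[h1 h2].
by rewrite h //; apply/andP; split; lia.
Qed.

Lemma sum_K (N : nat) (mu : nat -> nat) (n : nat) : (0 < n)%N ->
  ((\sum_(1 <= l < N.+1) ((mu l)%:R / (n%:R ^+ l)) = 1 :> rat) <->
   Kl N (fun i => (mu i)%:Z) n%:Z = 0).
Proof.
move=> hn.
have hn0 : (n%:R : rat) != 0 by rewrite pnatr_eq0 -lt0n.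
have key : ((Kl N (fun i => (mu i)%:Z) n%:Z)%:~R : rat) =
   n%:R ^+ N * (1 - \sum_(1 <= l < N.+1) ((mu l)%:R / (n%:R ^+ l))).
  rewrite /Kl rmorphB rmorphXn /= rmorph_sum /= mulrBr mulr1 mulr_sumr.
  congr (_ - _).
  apply: eq_big_nat => i /andP[h1 h2].
  rewrite rmorphM rmorphXn /=.
  have e : (n%:R : rat) ^+ N = n%:R ^+ (N - i) * n%:R ^+ i by rewrite -exprD subnK.
  rewrite e; field. by rewrite expf_neq0.
split => h.
  by apply/eqP; rewrite -(intr_eq0 rat) key h subrr mulr0.
move/eqP: h; rewrite -(intr_eq0 rat) key mulf_eq0 expf_eq0 (negbTE hn0) andbF /=.
by rewrite subr_eq0 => /eqP <-.
Qed.

End NumS.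


Section NumS2.
Local Open Scope ring_scope.
Variables (n0 n1 : nat).
Definition Kp (e o : nat -> nat) l := Kl l (fun i => (e i)%:Z + (o i)%:Z) (n0%:Z + n1%:Z).
Definition Km (e o : nat -> nat) l := Kl l (fun i => (e i)%:Z - (o i)%:Z) (n0%:Z - n1%:Z).

Lemma Kp_ext e o e' o' l : (forall i, (0 < i <= l)%N -> e i = e' i /\ o i = o' i) ->
  Kp e o l = Kp e' o' l /\ Km e o l = Km e' o' l.
Proof.
move=> h; split; apply: Kl_ext => i /h [-> ->] //.
Qed.

Lemma parity e o l : exists j : int, Kp e o l - Km e o l = 2 * j.
Proof.
elim: l => [|l [j hj]]; first by exists 0; rewrite /Kp /Km !Kl0; ring.
exists (n0%:Z * j + n1%:Z * (j + Km e o l) - (o l.+1)%:Z).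
rewrite /Kp /Km !KlS -/(Kp e o l) -/(Km e o l).
have -> : Kp e o l = Km e o l + 2 * j by rewrite -hj; ring.
ring.
Qed.

Lemma numeric (e o : nat -> nat) (r : nat) :
  (forall l, (1 <= l < r)%N -> `|Km e o l| <= Kp e o l) ->
  Kp e o r <= - `|Km e o r| ->
  exists e' o' : nat -> nat,
    (0 < r)%N /\ [/\ forall l, (l < r)%N -> e' l = e l /\ o' l = o l,
        (e' r <= e r)%N /\ (o' r <= o r)%N,
        forall l, (r < l)%N -> e' l = 0%N /\ o' l = 0%N,
        (forall l, (1 <= l)%N -> `|Km e' o' l| <= Kp e' o' l) &
        Kp e' o' r = 0].
Proof.
move=> h4 hr.
case: r h4 hr => [|r'] h4 hr.
  by move: hr; rewrite /Kp /Km !Kl0 normr1 //.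
set P := Kp e o r'; set M := Km e o r'.
have hPM : `|M| <= P.
  case: r' h4 @P @M {hr} => [|r'] h4 P M; first by rewrite /P /M /Kp /Km !Kl0 normr1.
  by apply: h4; rewrite /=; lia.
have hP1 : M <= P by apply: le_trans hPM; apply: ler_norm.
have hP2 : - M <= P by apply: le_trans hPM; rewrite -normrN; apply: ler_norm.
have [j hj] := parity e o r'.
rewrite -/P -/M in hj.
set h := n0%:Z * M + (n0%:Z + n1%:Z) * j.
set g := n0%:Z * j + n1%:Z * M + n1%:Z * j.
have hr' : Kp e o r'.+1 = (n0%:Z + n1%:Z) * P - ((e r'.+1)%:Z + (o r'.+1)%:Z) by rewrite /Kp KlS.
have hm' : Km e o r'.+1 = (n0%:Z - n1%:Z) * M - ((e r'.+1)%:Z - (o r'.+1)%:Z) by rewrite /Km KlS.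
have hr1 : Kp e o r'.+1 <= - Km e o r'.+1.
  apply: le_trans hr _; rewrite lerN2; apply: ler_norm.
have hr2 : Kp e o r'.+1 <= Km e o r'.+1.
  apply: le_trans hr _; rewrite -normrN lerNl; apply: ler_norm.
rewrite hr' hm' in hr1 hr2.
have h0 : 0 <= h by rewrite /h; nia.
have g0 : 0 <= g by rewrite /g; nia.
have he : h <= (e r'.+1)%:Z by rewrite /h; nia.
have ho : g <= (o r'.+1)%:Z by rewrite /g; nia.
have [hn hhn] : exists hn : nat, h = hn%:Z by exists `|h|%N; rewrite abszE ger0_norm.
have [gn hgn] : exists gn : nat, g = gn%:Z by exists `|g|%N; rewrite abszE ger0_norm.
pose e' l := if (l < r'.+1)%N then e l else if l == r'.+1 then hn else 0%N.
pose o' l := if (l < r'.+1)%N then o l else if l == r'.+1 then gn else 0%N.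
have hlt : forall l, (l < r'.+1)%N -> e' l = e l /\ o' l = o l.
  by move=> l hl; rewrite /e' /o' hl.
have hext : forall l, (l < r'.+1)%N -> Kp e' o' l = Kp e o l /\ Km e' o' l = Km e o l.
  move=> l hl; apply: Kp_ext => i /andP[_ hi]; apply: hlt; lia.
have hK0 : Kp e' o' r'.+1 = 0 /\ Km e' o' r'.+1 = 0.
  rewrite /Kp /Km !KlS -/(Kp e' o' r') -/(Km e' o' r').
  have [-> ->] := hext r' (ltnSn r').
  rewrite /e' /o' ltnn eqxx -hhn -hgn -/P -/M /h /g.
  have -> : P = M + 2 * j by rewrite -hj; ring.
  split; ring.
have hgt : forall d, Kp e' o' (r'.+1 + d) = 0 /\ Km e' o' (r'.+1 + d) = 0.
  elim => [|d [h1 h2]]; first by rewrite addn0.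
  rewrite /Kp /Km in h1 h2; rewrite addnS /Kp /Km !(KlS (r'.+1 + d)) h1 h2.
  have hh : ((r'.+1 + d).+1 < r'.+1)%N = false by lia.
  have hh' : ((r'.+1 + d).+1 == r'.+1)%N = false by lia.
  by rewrite /e' /o' hh hh' !mulr0 subr0.
exists e', o'; split => //; split => //.
- by rewrite /e' /o' ltnn eqxx; split; lia.
- move=> l hl; have hh : (l < r'.+1)%N = false by lia.
  have hh' : (l == r'.+1) = false by lia.
  by rewrite /e' /o' hh hh'.
- move=> l hl1; case: (ltngtP l r'.+1) => hl.
  + have [-> ->] := hext l hl; apply: h4; lia.
  + have [d ->] : exists d, l = (r'.+1 + d)%N by exists (l - r'.+1)%N; lia.
    by have [-> ->] := hgt d; rewrite normr0.
  + by rewrite hl; case: hK0 => -> ->; rewrite normr0.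
- by case: hK0.
Qed.
End NumS2.


Section MkE.
Variable Sigma : finType.
Variables (H : vlg Sigma) (V' : {set vst H}) (sel : pred (ved H)) (hV : V' != set0).

Definition keep (ed : ved H) := [&& vsrc ed \in V', vdst ed \in V' & sel ed].
Lemma keep_src ed : keep ed -> vsrc ed \in V'. Proof. by case/and3P. Qed.
Lemma keep_dst ed : keep ed -> vdst ed \in V'. Proof. by case/and3P. Qed.
Definition Est := {x : vst H | x \in V'}.
Definition Eed := {ed : ved H | keep ed}.
Definition Esrc (e : Eed) : Est := exist _ (vsrc (val e)) (keep_src (valP e)).
Definition Edst (e : Eed) : Est := exist _ (vdst (val e)) (keep_dst (valP e)).
Definition Elab (e : Eed) := vlab (val e).
Lemma Elab_ne e : Elab e != [::]. Proof. exact: vlab_nonempty. Qed.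
Lemma Est_ne : 0 < #|{: Est}|.
Proof. rewrite card_sig (@eq_card _ _ (mem V')) ?card_gt0 //. Qed.
Definition Eg : vlg Sigma := @VLG Sigma Est Eed Esrc Edst Elab Elab_ne Est_ne.


Lemma Eg_path (u : Est) (p : seq Eed) : @vpath _ Eg u p -> vpath (val u) (map val p).
Proof.
elim: p u => [|e p IH] u //= /andP[/eqP he hp]; rewrite -he /= eqxx /=; exact: (IH (Edst e)).
Qed.

Lemma Eg_word (p : seq Eed) : @vword _ Eg p = vword (map val p).
Proof. by rewrite /vword -map_comp. Qed.

Lemma Eg_det : vdeterministic H -> vdeterministic Eg.
Proof.
move=> hd e e' ne hs; apply: hd; last by have := congr1 val hs.
by apply: contra ne => /eqP h; apply/eqP/val_inj.
Qed.

Lemma Eg_SH w : inSH Eg w -> inSH H w.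
Proof.
case=> u [p [hp hw]]; exists (val u), (map val p); split; first exact: Eg_path.
by rewrite -Eg_word.
Qed.

Lemma Eg_maxlen r : max_len H r -> max_len Eg r.
Proof. by move=> h e; apply: h. Qed.

Lemma Eg_count (x : Est) (P : pred (seq Sigma)) :
  count P (@out_labels _ Eg x) =
  #|[pred ed | keep ed && ((vsrc ed == val x) && P (vlab ed))]|.
Proof.
rewrite /out_labels count_map_filter_enum -(card_sig_pred keep (fun ed => (vsrc ed == val x) && P (vlab ed))).
by apply: eq_card => e; rewrite !inE /= -val_eqE.
Qed.

End MkE.


Section Helpers.
Variable Sigma : finType.

Lemma size_le_rr (s : seq (seq Sigma)) w : w \in s -> (size w <= rr s)%N.
Proof.
rewrite /rr; elim: s => [|x s IH] //= ; rewrite inE big_cons => /orP[/eqP ->|/IH h].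
  exact: leq_maxl.
by apply: leq_trans h (leq_maxr _ _).
Qed.

Lemma rr_le (s : seq (seq Sigma)) N : (forall w, w \in s -> size w <= N)%N -> (rr s <= N)%N.
Proof.
rewrite /rr; elim: s => [|x s IH] h; first by rewrite big_nil.
rewrite big_cons geq_max h ?mem_head //=; apply: IH => w hw; apply: h; rewrite inE hw orbT //.
Qed.

Lemma count_gt_rr (s : seq (seq Sigma)) l (Q : pred (seq Sigma)) :
  (rr s < l)%N -> count (fun w => (size w == l) && Q w) s = 0%N.
Proof.
move=> hl; apply/eqP; rewrite eqn0Ngt -has_count; apply/hasPn => w hw.
apply/negP => /andP[/eqP hs _]; have h2 := size_le_rr hw; by move: h2; rewrite hs leqNgt hl.
Qed.

Lemma sum_rr_trunc (s : seq (seq Sigma)) N (F : nat -> rat) :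
  (rr s <= N)%N -> (forall l, (rr s < l)%N -> F l = 0%R) ->
  (\sum_(1 <= l < N.+1) F l = \sum_(1 <= l < (rr s).+1) F l)%R.
Proof.
move=> hN hF; rewrite (@big_cat_nat _ _ _ (rr s).+1) //= ?ltnS //.
rewrite -[RHS]addr0; congr (_ + _)%R.
rewrite big_nat_cond big1 // => i /andP[/andP[hi _] _]; apply: hF; lia.
Qed.

Lemma subset_card_exists (T : finType) (A : {set T}) k :
  (k <= #|A|)%N -> exists2 B : {set T}, B \subset A & #|B| = k.
Proof.
elim: k => [|k IH] hk; first by exists set0; rewrite ?sub0set ?cards0.
have [B hBA hB] := IH (ltnW hk).
have : ~~ (A \subset B).
  apply/negP => /subset_leq_card; lia.
case/subsetPn => x hxA hxB.
exists (x |: B); first by rewrite subUset sub1set hxA hBA.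
by rewrite cardsU1 hxB hB.
Qed.

End Helpers.


Section RtoL.
Variables (Sigma : finType) (S : seq Sigma -> Prop) (S1 : {set Sigma}) (n0 n1 r : nat).
Hypothesis hn0 : (0 < n0)%N.

Lemma rhs_to_lhs (H : vlg Sigma) (V' : {set vst H}) :
  vdeterministic H -> vpresents H S -> max_len H r -> principal_states S1 n0 n1 V' ->
  exists E : vlg Sigma, [/\ vdeterministic E, is_VLE S S1 n0 n1 E & max_len E r].
Proof.
move=> hd hp hm [hV hprin].
pose ind (u : vst H) (ed : ved H) := [&& vsrc ed == u, vsrc ed \in V' & vdst ed \in V'].
pose sl u := induced_out_labels V' u.
have hcount : forall u (P : pred (seq Sigma)),
    count P (sl u) = #|[pred ed | ind u ed && P (vlab ed)]|.
  by move=> u P; rewrite /sl /induced_out_labels count_map_filter_enum.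
pose Props u (t : (nat -> nat) * (nat -> nat) * {set ved H}) :=
  let: (e', o', B) := t in
  [/\ (forall l, (l < rr (sl u))%N -> e' l = eta_of S1 (sl u) l /\ o' l = omega_of S1 (sl u) l),
      (forall l, (rr (sl u) < l)%N -> e' l = 0%N /\ o' l = 0%N),
      (forall l, (1 <= l)%N -> `|Km n0 n1 e' o' l| <= Kp n0 n1 e' o' l)%R,
      Kp n0 n1 e' o' (rr (sl u)) = 0%R &
      [/\ B \subset [set ed | ind u ed && (size (vlab ed) == rr (sl u))],
          #|B :&: [set ed | ~~ odd_word S1 (vlab ed)]| = e' (rr (sl u)) &
          #|B :&: [set ed | odd_word S1 (vlab ed)]| = o' (rr (sl u))]].
have hch : forall u, exists t, u \in V' -> Props u t.
  move=> u; case: (boolP (u \in V')) => hu; last by exists (fun _ => 0%N, fun _ => 0%N, set0).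
  have [h1 h2] := hprin u hu.
  have [e' [o' [_ [hlt [her hor] hgt hE4 hK0]]]] :=
    @numeric n0 n1 (eta_of S1 (sl u)) (omega_of S1 (sl u)) (rr (sl u)) h2 h1.
  set ru := rr (sl u) in hlt her hor hgt hE4 hK0 *.
  pose Ae := [set ed | ind u ed && (size (vlab ed) == ru) && ~~ odd_word S1 (vlab ed)].
  pose Ao := [set ed | ind u ed && (size (vlab ed) == ru) && odd_word S1 (vlab ed)].
  have hAe : #|Ae| = eta_of S1 (sl u) ru.
    by rewrite /eta_of hcount; apply: eq_card => ed; rewrite !inE andbA.
  have hAo : #|Ao| = omega_of S1 (sl u) ru.
    by rewrite /omega_of hcount; apply: eq_card => ed; rewrite !inE andbA.
  have [Be hBe hBe'] : exists2 B : {set ved H}, B \subset Ae & #|B| = e' ru.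
    by apply: subset_card_exists; rewrite hAe.
  have [Bo hBo hBo'] : exists2 B : {set ved H}, B \subset Ao & #|B| = o' ru.
    by apply: subset_card_exists; rewrite hAo.
  exists (e', o', Be :|: Bo) => _; split => //; split.
  - rewrite subUset; apply/andP; split; [apply: subset_trans hBe _|apply: subset_trans hBo _];
      by apply/subsetP => ed; rewrite !inE => /andP[].
  - rewrite -hBe'; apply: eq_card => ed; rewrite !inE.
    case: (boolP (ed \in Be)) => hb; first by have := subsetP hBe ed hb; rewrite !inE => /andP[_ ->].
    case: (boolP (ed \in Bo)) => hb' //=; by have := subsetP hBo ed hb'; rewrite !inE => /andP[_ ->].
  - rewrite -hBo'; apply: eq_card => ed; rewrite !inE.
    case: (boolP (ed \in Bo)) => hb; first by have := subsetP hBo ed hb; rewrite !inE orbT => /andP[_ ->].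
    case: (boolP (ed \in Be)) => hb' //=; by have := subsetP hBe ed hb'; rewrite !inE => /andP[_ /negbTE ->].
have [f hf] := fin_all_exists hch.
pose sel ed := (size (vlab ed) < rr (sl (vsrc ed)))%N || (ed \in (f (vsrc ed)).2).
pose E := @Eg _ H V' sel hV.
exists E; split.
- exact: Eg_det.
- split.
  + apply: det_lossless; exact: Eg_det.
  + by move=> w /Eg_SH /(hp w).2.
  + move=> [u hu] /=.
    have := hf u hu; case heq: (f u) => [[e' o'] B] [hlt hgt hE4 hK0 [hsub hBe hBo]].
    set ru := rr (sl u) in hlt hgt hE4 hK0 hsub hBe hBo.
    have key : forall l (Q : pred (seq Sigma)), (1 <= l)%N ->
      count (fun w => (size w == l) && Q w) (@out_labels _ E (exist _ u hu)) =
      if (l < ru)%N then count (fun w => (size w == l) && Q w) (sl u)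
      else if l == ru then #|B :&: [set ed | Q (vlab ed)]| else 0%N.
      move=> l Q hl1; rewrite Eg_count /=.
      case: (ltngtP l ru) => hl.
      * rewrite hcount; apply: eq_card => ed; rewrite !inE /keep /sel /ind.
        case: (eqVneq (vsrc ed) u) => [hs|hs] /=; last by rewrite !andbF.
        rewrite hs hu /=; case: (eqVneq (size (vlab ed)) l) => [hz|hz] /=; last by rewrite !andbF.
        by rewrite hz hl /= !andbT.
      * apply: eq_card0 => ed; rewrite !inE /keep /sel.
        apply/negP => /andP[/and3P[h1 h2 _] /andP[/eqP hs /andP[/eqP hz _]]].
        have : vlab ed \in sl u.
          by apply: map_f; rewrite mem_filter mem_enum hs h2 eqxx /= -hs h1.
        move/size_le_rr; rewrite hz -/ru; lia.
      * apply: eq_card => ed; rewrite !inE /keep /sel.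
        case: (boolP (ed \in B)) => hB /=.
          have := subsetP hsub ed hB; rewrite !inE => /andP[/and3P[/eqP hs h1 h2] /eqP hz].
          by rewrite h1 h2 hs hz hl heq hB orbT /= !eqxx.
        case: (eqVneq (vsrc ed) u) => [hs|hs] /=; last by rewrite !andbF.
        case: (eqVneq (size (vlab ed)) l) => [hz|hz] /=; last by rewrite !andbF.
        by rewrite hs hz heq (negbTE hB) hl ltnn /= !andbF.
    have hcE : forall l, (1 <= l)%N ->
        eta_of S1 (@out_labels _ E (exist _ u hu)) l = e' l /\ omega_of S1 (@out_labels _ E (exist _ u hu)) l = o' l.
      move=> l hl1; rewrite /eta_of /omega_of !key //.
      case: (ltngtP l ru) => hl.
      * by have [-> ->] := hlt l hl.
      * by have [-> ->] := hgt l hl.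
      * by rewrite hl hBe hBo.
    have hKp : forall l, Kplus S1 n0 n1 (@out_labels _ E (exist _ u hu)) l = Kp n0 n1 e' o' l.
      by move=> l; apply: Kl_ext => i /andP[hi _]; have [-> ->] := hcE i hi.
    have hKm : forall l, Kminus S1 n0 n1 (@out_labels _ E (exist _ u hu)) l = Km n0 n1 e' o' l.
      by move=> l; apply: Kl_ext => i /andP[hi _]; have [-> ->] := hcE i hi.
    split; last by move=> l hl; rewrite hKp hKm; apply: hE4.
    have hrrE : (rr (@out_labels _ E (exist _ u hu)) <= rr (sl u))%N.
      apply: rr_le => w /mapP[e he ->].
      rewrite mem_filter in he; case/andP: he => /eqP hs _.
      have hk := valP e.
      have hs' : vsrc (val e) = u by have := congr1 val hs.
      apply: size_le_rr; apply: map_f; rewrite mem_filter mem_enum andbT.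
      by case/and3P: hk => h1 h2 _; rewrite hs' eqxx -hs' h1 h2.
    rewrite -(@sum_rr_trunc _ _ (rr (sl u))) //; last first.
      by move=> l hl; rewrite /eta_of /omega_of !count_gt_rr //= mul0r.
    rewrite (eq_big_nat _ _ (F2 := fun l => ((e' l + o' l)%:R / ((n0 + n1)%:R ^+ l))%R)); last first.
      by move=> l /andP[hl _]; have [-> ->] := hcE l hl.
    apply/(sum_K _ (fun l => e' l + o' l)%N); first by lia.
    rewrite -hK0 /Kp PoszD; apply: Kl_ext => i _; by rewrite PoszD.
- exact: Eg_maxlen.
Qed.
End RtoL.


Section GRead.
Variable Sigma : finType.
Variable G : lgraph Sigma.
Hypothesis hGd : gdeterministic G.

Definition gstep (g : gst G) (a : Sigma) : option (gst G) :=
  omap (@gdst _ G) [pick f | (gsrc f == g) && (glab f == a)].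

Fixpoint gread (g : gst G) (w : seq Sigma) : option (gst G) :=
  match w with
  | [::] => Some g
  | a :: w' => if gstep g a is Some g' then gread g' w' else None
  end.

Lemma gread_cat g w1 w2 : gread g (w1 ++ w2) = obind (fun g' => gread g' w2) (gread g w1).
Proof. elim: w1 g => [|a w1 IH] g //=; case: (gstep g a) => //. Qed.

Lemma gstep_edge (f : ged G) : gstep (gsrc f) (glab f) = Some (gdst f).
Proof.
rewrite /gstep; case: pickP => [f' /andP[/eqP hs /eqP hl]|h]; last by have := h f; rewrite !eqxx.
case: (eqVneq f' f) => [->//|ne].
by have := hGd ne hs.
Qed.

Lemma gstep_some g a g' : gstep g a = Some g' ->
  exists f : ged G, [/\ gsrc f = g, glab f = a & gdst f = g'].
Proof.
rewrite /gstep; case: pickP => [f /andP[/eqP hs /eqP hl]|//] [<-].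
by exists f.
Qed.

Lemma gend_cons (g : gst G) (f : ged G) p : gend g (f :: p) = gend (gdst f) p.
Proof. by []. Qed.

Lemma gpath_read g p : gpath g p -> gread g (map (@glab _ G) p) = Some (gend g p).
Proof.
elim: p g => [|f p IH] g //= /andP[/eqP hs hp].
by rewrite -hs gstep_edge; apply: IH.
Qed.

Lemma read_path g w g' : gread g w = Some g' ->
  exists p, [/\ gpath g p, map (@glab _ G) p = w & gend g p = g'].
Proof.
elim: w g => [|a w IH] g /=; first by move=> [<-]; exists [::].
case hs: (gstep g a) => [g1|//] hr.
have [f [h1 h2 h3]] := gstep_some hs.
have [p [hp hw he]] := IH _ hr.
exists (f :: p); split => /=; first by rewrite h1 eqxx h3.
  by rewrite h2 hw.
by rewrite gend_cons h3.
Qed.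

Lemma read_infix g W g' w : gread g W = Some g' -> infix w W ->
  exists g1 p, gpath g1 p /\ w = map (@glab _ G) p.
Proof.
move=> hr /infixP[a [b hW]]; subst W.
move: hr; rewrite gread_cat; case ha: (gread g a) => [g1|//] /=.
rewrite gread_cat; case hw: (gread g1 w) => [g2|//] _.
have [p [hp hpw _]] := read_path hw.
by exists g1, p.
Qed.

Lemma read_prefix g w1 w2 : gread g (w1 ++ w2) != None -> gread g w1 != None.
Proof. by rewrite gread_cat; case: (gread g w1). Qed.

End GRead.


Section FindInv.
Variable Sigma : finType.
Variable G : lgraph Sigma.
Variable E : vlg Sigma.
Hypothesis hGd : gdeterministic G.

Definition Inv (c : vst E) (y : gst G) := forall p, vpath c p -> gread y (vword p) != None.
Definition delta (Y : {set gst G}) w := [set y' | [exists y in Y, gread y w == Some y']].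

Lemma delta_nil Y : delta Y [::] = Y.
Proof.
apply/setP => z; rewrite !inE; apply/existsP/idP => [[y /andP[hy /eqP [<-]]] //|hz].
by exists z; rewrite hz eqxx.
Qed.

Lemma delta_cat Y w1 w2 : delta (delta Y w1) w2 = delta Y (w1 ++ w2).
Proof.
apply/setP => z; rewrite !inE; apply/existsP/existsP.
  case=> y' /andP[]; rewrite inE => /existsP[y /andP[hy /eqP h1]] /eqP h2.
  by exists y; rewrite hy gread_cat h1 /= h2 eqxx.
case=> y /andP[hy]; rewrite gread_cat; case h1: (gread y w1) => [y'|//] /= /eqP h2.
exists y'; rewrite inE h2 eqxx andbT; apply/existsP; exists y; by rewrite hy h1 eqxx.
Qed.

Lemma find_inv_aux k (c : vst E) (Y : {set gst G}) : (#|Y| <= k)%N ->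
  (forall p, vpath c p -> delta Y (vword p) != set0) -> exists c0 y0, Inv c0 y0.
Proof.
elim: k c Y => [|k IH] c Y hk hg.
  have := hg [::] isT; rewrite /vword /= delta_nil -card_gt0; lia.
case: (classic (forall p, vpath c p -> forall y, y \in Y -> gread y (vword p) != None)) => [h|h].
  have /set0Pn [y hy] : Y != set0 by have := hg [::] isT; rewrite /vword /= delta_nil.
  by exists c, y => p hp; exact: h p hp y hy.
have [p hp'] := not_all_ex_not _ _ h.
have [hp hp2] := imply_to_and _ _ hp'.
have [y hy'] := not_all_ex_not _ _ hp2.
have [hy hn] := imply_to_and _ _ hy'.
have hn' : gread y (vword p) = None by move/negP: hn; case: (gread y (vword p)).
apply: (IH (vend c p) (delta Y (vword p))).
  pose Yd := [set z in Y | gread z (vword p) != None].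
  have h1 : (#|delta Y (vword p)| <= #|Yd|)%N.
    apply: leq_trans (leq_imset_card (fun z => odflt z (gread z (vword p))) Yd).
    apply: subset_leq_card; apply/subsetP => z; rewrite inE => /existsP[z' /andP[hz' /eqP hr]].
    by apply/imsetP; exists z'; rewrite ?inE ?hz' ?hr.
  have h2 : (#|Yd| < #|Y|)%N.
    apply: proper_card; apply/properP; split.
      by apply/subsetP => z; rewrite inE => /andP[].
    by exists y; rewrite // inE hn' eqxx andbF.
  lia.
move=> q hq; rewrite delta_cat -vword_cat; apply: hg.
by rewrite vpath_cat hp hq.
Qed.

Lemma find_inv (S : seq Sigma -> Prop) : gpresents G S -> (forall w, inSH E w -> S w) ->
  exists c0 y0, Inv c0 y0.
Proof.
move=> hGp hE2.
have [c1 _] : exists c1 : vst E, c1 \in predT by apply/card_gt0P; apply: vst_nonempty.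
apply: (@find_inv_aux #|[set: gst G]| c1 setT) => // p hp.
have : S (vword p) by apply: hE2; exists c1, p; split => //; apply: infix_refl.
case/hGp => g [q [hq hw]].
apply/set0Pn; exists (gend g q); rewrite inE; apply/existsP; exists g.
by rewrite in_setT hw (gpath_read hGd hq) eqxx.
Qed.

Lemma Inv_edge c y e : Inv c y -> vsrc e = c ->
  exists y', gread y (vlab e) = Some y' /\ Inv (vdst e) y'.
Proof.
move=> hI he.
have := hI [:: e]; rewrite /= he eqxx /vword /= cats0 => /(_ isT).
case hr: (gread y (vlab e)) => [y'|//] _; exists y'; split => // q hq.
have := hI (e :: q); rewrite /= he eqxx hq => /(_ isT).
by rewrite vword_cons gread_cat hr.
Qed.

End FindInv.


Section H0.
Variable Sigma : finType.
Variable G : lgraph Sigma.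
Variable E : vlg Sigma.
Variable r : nat.
Variables (c0 : vst E) (y0 : gst G).
Hypothesis hGd : gdeterministic G.
Hypothesis hEd : vdeterministic E.
Hypothesis hEm : max_len E r.
Hypothesis hr : (0 < r)%N.

Definition X := ((vst E * gst G) + gst G)%type.
Definition track (z : X) : gst G := match z with inl (_, y) => y | inr g => g end.
Definition Lab (c : vst E) (y : gst G) : seq (seq Sigma) :=
  [seq vlab e | e <- enum (ved E) & (vsrc e == c) && (gread y (vlab e) != None)].
Definition decode (t : r.-tuple (option Sigma)) : seq Sigma := pmap id (val t).
Definition canon (t : r.-tuple (option Sigma)) : bool :=
  val t == map Some (decode t) ++ nseq (r - size (decode t)) None.
Definition exit_ok c y (x : seq Sigma) : bool :=
  [&& x != [::], gread y x != None, all (fun l => ~~ prefix l x && ~~ prefix x l) (Lab c y) &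
      (size x == 1) || has (fun l => prefix (take (size x).-1 x) l) (Lab c y)].
Definition Raw := ((ved E * gst G) + ((vst E * gst G) * r.-tuple (option Sigma)) + ged G)%type.
Definition rvalid (x : Raw) : bool :=
  match x with
  | inl (inl (e, y)) => gread y (vlab e) != None
  | inl (inr ((c, y), t)) => canon t && exit_ok c y (decode t)
  | inr f => true
  end.
Definition Ed0 := {x : Raw | rvalid x}.
Definition rsrc (x : Raw) : X :=
  match x with
  | inl (inl (e, y)) => inl (vsrc e, y)
  | inl (inr ((c, y), t)) => inl (c, y)
  | inr f => inr (gsrc f)
  end.
Definition rdst (x : Raw) : X :=
  match x with
  | inl (inl (e, y)) => inl (vdst e, odflt y (gread y (vlab e)))
  | inl (inr ((c, y), t)) => inr (odflt y (gread y (decode t)))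
  | inr f => if gdst f == y0 then inl (c0, y0) else inr (gdst f)
  end.
Definition rlab (x : Raw) : seq Sigma :=
  match x with
  | inl (inl (e, y)) => vlab e
  | inl (inr (_, t)) => decode t
  | inr f => [:: glab f]
  end.
Lemma rlab_ne (e : Ed0) : rlab (val e) != [::].
Proof.
case: e => [[[[e y]|[[c y] t]]|f]] //= h; first exact: vlab_nonempty.
by case/andP: h => _ /and4P[].
Qed.
Lemma X_ne : (0 < #|{: X}|)%N.
Proof. by apply/card_gt0P; exists (inl (c0, y0)). Qed.
Definition H0 : vlg Sigma :=
  @VLG Sigma X Ed0 (fun e => rsrc (val e)) (fun e => rdst (val e)) (fun e => rlab (val e)) rlab_ne X_ne.

Lemma H0_track (ed : ved H0) : gread (track (vsrc ed)) (vlab ed) = Some (track (vdst ed)).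
Proof.
case: ed => [[[[e y]|[[c y] t]]|f] hv] /=.
- by move: hv => /=; case: (gread y (vlab e)).
- by move: hv => /= /andP[_ /and4P[_ +]]; case: (gread y (decode t)).
- rewrite (gstep_edge hGd); by case: eqP => [->|].
Qed.

Lemma H0_track_path (z : vst H0) p : vpath z p -> gread (track z) (vword p) = Some (track (vend z p)).
Proof.
elim: p z => [|ed p IH] z //= /andP[/eqP hs hp].
by rewrite vword_cons gread_cat -hs H0_track /= IH.
Qed.

Lemma H0_maxlen : max_len H0 r.
Proof.
case=> [[[[e y]|[[c y] t]]|f] hv] /=.
- exact: hEm.
- by rewrite /decode size_pmap; apply: leq_trans (count_size _ _) _; rewrite size_tuple.
- exact: hr.
Qed.


Lemma Lab_mem c y e : vsrc e = c -> gread y (vlab e) != None -> vlab e \in Lab c y.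
Proof. by move=> hs hr'; apply: map_f; rewrite mem_filter mem_enum hs eqxx hr'. Qed.

Lemma decode_inj t t' : canon t -> canon t' -> decode t = decode t' -> t = t'.
Proof. by move=> /eqP h /eqP h' e; apply: val_inj; rewrite h h' e. Qed.

Lemma H0_det : vdeterministic H0.
Proof.
case=> [[[[e y]|[[c y] t]]|f] hv]; case=> [[[[e' y']|[[c' y'] t']]|f'] hv'] //= ne hs.
- case: hs => hs hy; subst y'.
  apply: hEd hs; apply: contra ne => /eqP ee; subst e'; apply/eqP/val_inj => //.
- case: hs => hs hy; subst c' y'.
  move: hv' => /= /andP[_ /and4P[_ _ /allP hall _]].
  by have /andP[] := hall _ (Lab_mem (erefl _) hv).
- case: hs => hs hy; subst c y'.
  move: hv => /= /andP[_ /and4P[_ _ /allP hall _]].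
  by have /andP[] := hall _ (Lab_mem (erefl _) hv').
- case: hs => hc hy; subst c' y'.
  have /= /andP[hc1 /and4P[hx hrx /allP hall hpar]] := hv.
  have /= /andP[hc2 /and4P[hx' hrx' /allP hall' hpar']] := hv'.
  apply/negP => hp.
  case: (eqVneq (decode t) (decode t')) => hdt.
    move/negP: ne; apply; apply/eqP/val_inj => /=; by rewrite (decode_inj hc1 hc2 hdt).
  have hsz : (size (decode t) < size (decode t'))%N.
    rewrite ltn_neqAle size_prefix // andbT; apply: contra hdt => /eqP hz.
    by move: hp; rewrite prefixE hz take_size eq_sym.
  have hsz1 : (0 < size (decode t))%N by rewrite lt0n size_eq0.
  move: hpar'; have -> : (size (decode t') == 1) = false by apply/negP => /eqP; lia.
  case/hasP => l hl hpl.
  have : prefix (decode t) l.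
    apply: prefix_trans hpl; rewrite prefixE.
    rewrite take_takel; last by rewrite -ltnS (ltn_predK hsz).
    by move: hp; rewrite prefixE.
  by have /andP[_ /negP] := hall l hl.
- case: hs => hs; rewrite andbT; apply/eqP; apply: hGd hs.
  by apply: contra ne => /eqP ee; subst f'; apply/eqP/val_inj.
Qed.

End H0.


Section Parse.
Variable Sigma : finType.
Variable G : lgraph Sigma.
Variable E : vlg Sigma.
Variable r : nat.
Variables (c0 : vst E) (y0 : gst G).
Hypothesis hGd : gdeterministic G.
Hypothesis hEd : vdeterministic E.
Hypothesis hEm : max_len E r.
Hypothesis hr : (0 < r)%N.

Local Notation H0 := (@H0 Sigma G E r c0 y0).

Lemma pmap_pad (s : seq Sigma) n : pmap id (map Some s ++ nseq n None) = s.
Proof. elim: s => [|a s IH] /=; last by rewrite IH. by elim: n. Qed.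

Lemma Lab_memP (c : vst E) (y : gst G) l : l \in Lab c y ->
  exists e, [/\ vsrc e = c, gread y (vlab e) != None & l = vlab e].
Proof. by case/mapP => e; rewrite mem_filter mem_enum andbT => /andP[/eqP h1 h2] ->; exists e. Qed.

Lemma prefix_cat2 (s s1 s2 : seq Sigma) : prefix s1 s2 -> prefix (s ++ s1) (s ++ s2).
Proof. by move=> h; rewrite prefix_catr // eqxx. Qed.

Lemma prefix_eq_size (s1 s2 : seq Sigma) : prefix s1 s2 -> size s1 = size s2 -> s1 = s2.
Proof.
move=> /prefixP [s3 ->]; rewrite size_cat => h.
have : (size s1 + 0 = size s1 + size s3)%N by rewrite addn0.
by move/addnI/esym/size0nil => ->; rewrite cats0.
Qed.

Lemma H0_parse n : forall (z : X G E) (W : seq Sigma), (size W <= n)%N ->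
  gread (track z) W != None -> exists p : seq (ved H0), @vpath _ H0 z p /\ prefix W (vword p).
Proof.
elim: n => [|n IH] z W hn hW.
  by exists [::]; split => //; move: hn; rewrite leqn0 size_eq0 => /eqP ->.
case: W hn hW => [|a W'] hn hW; first by exists [::].
case: z hW => [[c y]|g] /= hW.
-
  set W := a :: W' in hn *.
  have {}hW : gread y W != None := hW.
  case: (boolP (has (fun l => prefix l W) (Lab c y))) => [/hasP [l hl hpl]|hi].
    have [e [he1 he2 hle]] := Lab_memP hl; subst l.
    pose ed : ved H0 := exist _ (inl (inl (e, y))) he2.
    case/prefixP: hpl => W'' hWW.
    have [y' hy'] : exists y', gread y (vlab e) = Some y'.
      by have := he2; case: (gread y (vlab e)) => // y'; exists y'.
    have htr : track (vdst ed) = y' by rewrite /= hy'.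
    have hW'' : gread (track (vdst ed)) W'' != None by move: hW; rewrite hWW gread_cat hy' htr.
    have hl1 : (0 < size (vlab e))%N by rewrite lt0n size_eq0 vlab_nonempty.
    have hsz : (size W'' <= n)%N.
      move: hn; rewrite hWW size_cat; case: (size (vlab e)) hl1 => // m _.
      by rewrite addSn ltnS => h; apply: leq_trans h; apply: leq_addl.
    have [p [hp hpre]] := IH _ _ hsz hW''.
    exists (ed :: p); split; first by rewrite /= he1 eqxx hp.
    by rewrite vword_cons hWW prefix_cat2.
  case: (boolP (has (fun l => prefix W l) (Lab c y))) => [/hasP [l hl hpl]|hii].
    have [e [he1 he2 hle]] := Lab_memP hl; subst l.
    pose ed : ved H0 := exist _ (inl (inl (e, y))) he2.
    exists [:: ed]; split; first by rewrite /= he1 eqxx.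
    by rewrite vword_cons /vword /= cats0.
  pose P k := (0 < k)%N && ~~ has (fun l => prefix (take k W) l) (Lab c y).
  have hPW : P (size W) by rewrite /P take_size hii.
  case: (ex_minnP (ex_intro P _ hPW)) => k /andP[hk0 hk] hmin.
  have hkW : (k <= size W)%N := hmin _ hPW.
  set x := take k W.
  have hsx : size x = k by rewrite size_takel.
  have hpar : k != 1 -> has (fun l => prefix (take k.-1 W) l) (Lab c y).
    move=> hk1; apply/negPn/negP => hn'.
    have : (k <= k.-1)%N by apply: hmin; rewrite /P hn' andbT; lia.
    lia.
  have hxl : forall l, l \in Lab c y -> ~~ prefix l x /\ ~~ prefix x l.
    move=> l hl; split.
      apply/negP => hlx; move/hasPn: hi => /(_ l hl) /negP; apply.
      exact: prefix_trans hlx (prefix_take _ _).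
    by move/hasPn: hk => /(_ l hl).
  have hkr : (k <= r)%N.
    case: (eqVneq k 1) => [->//|hk1].
    have /hasP [l hl hpl] := hpar hk1.
    have [e [_ _ hle]] := Lab_memP hl.
    have hlr : (size l <= r)%N by rewrite hle; apply: hEm.
    have hkW' : (k.-1 <= size W)%N by apply: leq_trans (leq_pred k) hkW.
    have hsz1 : (k.-1 <= size l)%N by have := size_prefix hpl; rewrite size_takel.
    case: (eqVneq k.-1 (size l)) => heq; last by lia.
    exfalso.
    have hs2 : size (take k.-1 W) = size l by rewrite size_takel.
    have htl : take k.-1 W = l := prefix_eq_size hpl hs2.
    have [hlx _] := hxl l hl; move/negP: hlx; apply.
    rewrite -htl /x; have := prefix_take (take k W) k.-1; rewrite take_takel //; lia.
  have ht : size (map Some x ++ nseq (r - size x) None) == r.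
    by rewrite size_cat size_map size_nseq hsx; apply/eqP; lia.
  pose t : r.-tuple (option Sigma) := Tuple ht.
  have hdec : decode t = x by rewrite /decode /= pmap_pad.
  have hcan : canon t by rewrite /canon hdec.
  have [y' hy'] : exists y', gread y x = Some y'.
    move: hW; rewrite -{1}(cat_take_drop k W) gread_cat -/x; case: (gread y x) => // y' _; by exists y'.
  have hex : exit_ok c y (decode t).
    rewrite hdec /exit_ok; apply/and4P; split.
    - by rewrite -size_eq0 hsx -lt0n.
    - by rewrite hy'.
    - by apply/allP => l hl; have [-> ->] := hxl l hl.
    - rewrite hsx; case: (eqVneq k 1) => [->//|hk1] /=.
      rewrite /x take_takel ?leq_pred //; exact: hpar hk1.
  have hv : canon t && exit_ok c y (decode t) by rewrite hcan hex.
  pose ed : ved H0 := exist _ (inl (inr ((c, y), t))) hv.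
  have htr : track (vdst ed) = y' by rewrite /= hdec hy'.
  have hW'' : gread (track (vdst ed)) (drop k W) != None.
    by move: hW; rewrite -{1}(cat_take_drop k W) gread_cat -/x hy' htr.
  have hsz : (size (drop k W) <= n)%N by rewrite size_drop; lia.
  have [p [hp hpre]] := IH _ _ hsz hW''.
  exists (ed :: p); split; first by rewrite /= eqxx hp.
  by rewrite vword_cons /= hdec -{1}(cat_take_drop k W) -/x prefix_cat2.
-
  case hs: (gstep g a) hW => [g'|//] hW.
  have [f [h1 h2 h3]] := gstep_some hs.
  pose ed : ved H0 := exist _ (inr f) isT.
  have htr : track (vdst ed) = g' by rewrite /= -h3; case: eqP => [->|].
  have hW' : gread (track (vdst ed)) W' != None by rewrite htr.
  have [p [hp hpre]] := IH (vdst ed) W' hn hW'.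
  exists (ed :: p); split; first by rewrite /= h1 eqxx hp.
  by rewrite vword_cons /= h2 eqxx.
Qed.

End Parse.


Section Lift.
Variable Sigma : finType.
Variables (H : vlg Sigma) (V' : {set vst H}) (sel : pred (ved H)) (hV : V' != set0).
Hypothesis hk : forall ed, vsrc ed \in V' -> keep V' sel ed.

Lemma Eg_lift (u : Est V') (p : seq (ved H)) : vpath (val u) p ->
  exists q : seq (Eed V' sel),
    [/\ @vpath _ (Eg sel hV) u q, map val q = p & val (@vend _ (Eg sel hV) u q) = vend (val u) p].
Proof.
elim: p u => [|e p IH] u /=; first by exists [::].
move/andP => [/eqP hs hp].
have hke : keep V' sel e by apply: hk; rewrite hs (valP u).
pose ed : Eed V' sel := exist _ e hke.
have [q [hq hm hv]] := IH (Edst ed) hp.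
exists (ed :: q); split => //=.
- rewrite hq andbT; apply/eqP/val_inj => /=; exact: hs.
- by rewrite hm.
Qed.
End Lift.

Section Reach.
Variable Sigma : finType.
Variable H : vlg Sigma.
Definition vrel : rel (vst H) := fun x z => [exists ed : ved H, (vsrc ed == x) && (vdst ed == z)].

Lemma vpath_connect (x : vst H) p : vpath x p -> connect vrel x (vend x p).
Proof.
elim: p x => [|e p IH] x /=; first by move=> _; exact: connect0.
move/andP => [/eqP hs hp]; apply: connect_trans (IH _ hp).
by apply: connect1; apply/existsP; exists e; rewrite hs !eqxx.
Qed.

Lemma connect_vpath (x z : vst H) : connect vrel x z -> exists p, vpath x p /\ vend x p = z.
Proof.
case/connectP => s hs ->; elim: s x hs => [|y s IH] x /=; first by exists [::].
case/andP => /existsP [e /andP[/eqP h1 /eqP h2]] hs.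
have [p [hp he]] := IH _ hs.
exists (e :: p); split; first by rewrite /= h1 eqxx h2 hp.
by rewrite /vend /= -/(vend (vdst e) p) h2 he.
Qed.
End Reach.


Section LtoRaux.
Variables (Sigma : finType) (S1 : {set Sigma}) (n0 n1 : nat).
Hypothesis hn : (0 < n0 + n1)%N.

Lemma E3_nonempty (E : vlg Sigma) (c : vst E) :
  (\sum_(1 <= l < (rr (out_labels c)).+1)
     ((eta_of S1 (out_labels c) l + omega_of S1 (out_labels c) l)%:R / ((n0 + n1)%:R ^+ l))
     = 1 :> rat)%R ->
  exists e : ved E, vsrc e = c.
Proof.
case hs: (out_labels c) => [|w s].
  by rewrite /rr big_nil big_geq // => /eqP; rewrite eq_sym oner_eq0.
move=> _; have : w \in out_labels c by rewrite hs mem_head.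
by case/mapP => e; rewrite mem_filter => /andP[/eqP h _] _; exists e.
Qed.

Lemma principal_of_VLE (s : seq (seq Sigma)) :
  (\sum_(1 <= l < (rr s).+1) ((eta_of S1 s l + omega_of S1 s l)%:R / ((n0 + n1)%:R ^+ l))
     = 1 :> rat)%R ->
  (forall l, (1 <= l)%N -> (`|Kminus S1 n0 n1 s l| <= Kplus S1 n0 n1 s l)%R) ->
  (Kplus S1 n0 n1 s (rr s) <= - `|Kminus S1 n0 n1 s (rr s)|)%R /\
  (forall l, (1 <= l < rr s)%N -> (`|Kminus S1 n0 n1 s l| <= Kplus S1 n0 n1 s l)%R).
Proof.
move=> h3 h4; split; last by move=> l /andP[hl _]; apply: h4.
have hK : Kplus S1 n0 n1 s (rr s) = 0%R.
  have := (sum_K (rr s) _ hn).1 h3.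
  rewrite /Kplus PoszD => <-; apply: Kl_ext => i _; by rewrite PoszD.
have hr1 : (1 <= rr s)%N.
  case hr0: (rr s) h3 => [|k] //; rewrite big_geq // => /eqP; rewrite eq_sym oner_eq0.
have := h4 _ hr1; rewrite hK normr_le0 => /eqP ->; by rewrite normr0 oppr0.
Qed.

Lemma perm_K (s s' : seq (seq Sigma)) : perm_eq s s' ->
  [/\ rr s = rr s', forall l, Kplus S1 n0 n1 s l = Kplus S1 n0 n1 s' l &
      forall l, Kminus S1 n0 n1 s l = Kminus S1 n0 n1 s' l].
Proof.
move=> hp.
have he : forall l, eta_of S1 s l = eta_of S1 s' l by move=> l; apply: permP.
have ho : forall l, omega_of S1 s l = omega_of S1 s' l by move=> l; apply: permP.
split; first by rewrite /rr; apply: perm_big.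
- by move=> l; apply: Kl_ext => i _; rewrite he ho.
- by move=> l; apply: Kl_ext => i _; rewrite he ho.
Qed.
End LtoRaux.


Section LtoR.
Variables (Sigma : finType) (S : seq Sigma -> Prop) (S1 : {set Sigma}) (n0 n1 r : nat).
Hypothesis hr : (0 < r)%N.
Hypothesis hn : (0 < n0 + n1)%N.

Lemma lhs_to_rhs (E : vlg Sigma) :
  irreducible_constraint S -> vdeterministic E -> is_VLE S S1 n0 n1 E -> max_len E r ->
  exists H : vlg Sigma, [/\ vdeterministic H, virreducible H, vpresents H S, max_len H r &
         exists V' : {set vst H}, principal_states S1 n0 n1 V'].
Proof.
move=> [G [hGd hGs hGp]] hEd [hE1 hE2 hE34] hEm.
have [c0 [y0 hI]] := find_inv hGd hGp hE2.
pose H := @H0 Sigma G E r c0 y0.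
pose R := @vrel _ H.
pose x0 : vst H := inl (c0, y0).
pose reach (z : vst H) := [set w | connect R z w].
pose v := [arg min_(z < x0 | connect R x0 z) #|reach z|].
have [hv hmin] : connect R x0 v /\ forall z, connect R x0 z -> (#|reach v| <= #|reach z|)%N.
  rewrite /v; case: arg_minnP => [|z hz hm]; first exact: connect0.
  by split.
pose T := reach v.
have hvT : v \in T by rewrite /T inE connect0.
have hTcl : forall ed : ved H, vsrc ed \in T -> vdst ed \in T.
  move=> ed; rewrite /T !inE => h; apply: connect_trans h _; apply: connect1.
  by apply/existsP; exists ed; rewrite !eqxx.
have hTx0 : forall z, z \in T -> connect R x0 z.
  by move=> z; rewrite /T inE; apply: connect_trans.
have hTsc : forall z w, z \in T -> w \in T -> connect R z w.
  move=> z w hz hw.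
  have hsub : reach z \subset T.
    apply/subsetP => u; rewrite /T !inE => hu; apply: connect_trans hu; by rewrite /T inE in hz.
  have /eqP heq : reach z == T by rewrite eqEcard hsub hmin // hTx0.
  by move: hw; rewrite -heq inE.
have hTne : T != set0 by apply/set0Pn; exists v.
pose sel : pred (ved H) := fun _ => true.
pose Hf := @Eg _ H T sel hTne.
have hk : forall ed, vsrc ed \in T -> keep T sel ed.
  by move=> ed h; rewrite /keep h hTcl.
pose Inv' (z : vst H) := if z is inl (c, y) then Inv c y else True.
have hInvE : forall ed : ved H, Inv' (vsrc ed) -> Inv' (vdst ed).
  case=> [[[[e y]|[[c y] t]]|f] hvd] //=.
  - move=> hIe; have [y' [hy' hI']] := Inv_edge hIe (erefl _); by rewrite hy'.
  - by case: eqP.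
have hInvR : forall z, connect R x0 z -> Inv' z.
  have gen : forall p z0, Inv' z0 -> vpath z0 p -> Inv' (vend z0 p).
    elim=> [|ed p IH] z0 //= hz /andP[/eqP hs hp]; apply: IH hp; rewrite -hs in hz; exact: (hInvE ed hz).
  move=> z /connect_vpath [p [hp <-]]; apply: (gen p x0) => //.
have [e0 he0] : exists e : ved E, vsrc e = c0.
  have [h3 _] := hE34 c0; exact: (E3_nonempty h3).
have [y1 [hy1 _]] := Inv_edge hI he0.
have [f0 hf0] : exists f : ged G, gsrc f = y0.
  move: hy1; case hl: (vlab e0) (vlab_nonempty e0) => [|a w] // _ /=.
  case hs: (gstep y0 a) => [g'|//] _.
  by have [f [h1 _ _]] := gstep_some hs; exists f.
have hQ : forall g, connect R (inr g) x0.
  have aux : forall p g, gpath g p -> p != [::] -> gend g p = y0 -> connect R (inr g) x0.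
    elim=> [|f p IH] g //= /andP[/eqP hs hp] _ he.
    pose ed : ved H := exist _ (inr f) isT.
    have hsrc : vsrc ed = inr g by rewrite /= hs.
    case: (eqVneq (gdst f) y0) => hd.
      by apply: connect1; apply/existsP; exists ed; rewrite hsrc eqxx /= hd eqxx.
    apply: connect_trans (IH (gdst f) hp _ he).
      by apply: connect1; apply/existsP; exists ed; rewrite hsrc eqxx /= (negbTE hd) eqxx.
    by case: p {IH hp} he => //= he; move: hd; rewrite -he /gend /= eqxx.
  move=> g; case: (eqVneq g y0) => hg.
    have [p [hp hpe]] := hGs (gdst f0) y0.
    by apply: (aux (f0 :: p)); rewrite /= ?hf0 ?hg ?eqxx ?hp.
  have [p [hp hpe]] := hGs g y0.
  apply: (aux p) => //; apply: contra hg => /eqP hp0; by rewrite -hpe hp0.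
have [c1 [y1' hc1]] : exists c y, (inl (c, y) : vst H) \in T.
  case hvv : v => [[c y]|g]; first by exists c, y; rewrite -hvv.
  by exists c0, y0; rewrite /T inE hvv; apply: hQ.
exists Hf; split.
- exact: Eg_det (H0_det hGd hEd hr).
- move=> u w; have := hTsc _ _ (valP u) (valP w).
  case/connect_vpath => p [hp he].
  have [q [hq _ hqe]] := Eg_lift hTne hk hp.
  by exists q; split => //; apply: val_inj; rewrite hqe.
- move=> w; split.
  + move/hGp => [g [q [hq hw]]].
    pose u : Est T := exist _ v hvT.
    have [p1 [hp1 hpe1]] := hGs (track v) g.
    pose W := map (@glab _ G) p1 ++ w.
    have hW : gread (track v) W != None.
      by rewrite /W gread_cat (gpath_read hGd hp1) /= hpe1 hw (gpath_read hGd hq).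
    have [p [hp hpre]] := H0_parse c0 y0 hEm hr (leqnn (size W)) hW.
    have [q' [hq' hm _]] := Eg_lift hTne hk (u:=u) hp.
    exists u, q'; split => //; rewrite Eg_word hm.
    apply: infix_prefix_trans hpre; exact: suffix_infix.
  + move/Eg_SH => [z [p [hp hin]]].
    have htr := H0_track_path hGd hp.
    have [g1 [q [hq hw]]] := read_infix htr hin.
    by apply/hGp; exists g1, q.
- exact: Eg_maxlen (H0_maxlen hEm hr).
pose V'' : {set vst Hf} := [set x : vst Hf | if val (x : Est T) is inl _ then true else false].
exists V''; split.
  by apply/set0Pn; exists (exist _ (inl (c1, y1')) hc1); rewrite inE.
move=> [[[c y]|g] hx] hxV; last by rewrite inE in hxV.
have hIc : Inv c y := hInvR _ (hTx0 _ hx).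
have hperm : perm_eq (induced_out_labels V'' (exist _ (inl (c, y)) hx : vst Hf)) (out_labels c).
  apply/permP => P.
  rewrite /induced_out_labels /out_labels !count_map_filter_enum.
  pose xx : vst Hf := exist _ (inl (c, y)) hx.
  pose phi (ed : ved Hf) : option (ved E) :=
    if val (val ed) is inl (inl (e, _)) then Some e else None.
  have hA : forall ed : ved Hf, vsrc ed == xx ->
      (if val (vdst ed : Est T) is inl _ then true else false) ->
      exists2 e, val (val ed) = inl (inl (e, y)) & vsrc e = c.
    move=> [[raw hvd] hkd] /eqP /(congr1 val) hs hdV.
    case: raw hvd hkd hs hdV => [[[e y2]|[[c2 y2] t]]|f] hvd hkd /= hs hdV.
    - by case: hs => <- <-; exists e.
    - by [].
    - by [].
  rewrite -[LHS](card_in_imset (f := phi)); last first.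
    move=> ed1 ed2; rewrite !inE => /andP[/and3P[h1 _ h1'] _] /andP[/and3P[h2 _ h2'] _].
    have [e1 he1 hs1] := hA _ h1 h1'; have [e2 he2 hs2] := hA _ h2 h2'.
    rewrite /phi he1 he2 => -[ee]; subst e2.
    by apply: val_inj; apply: val_inj; rewrite he1 he2.
  rewrite -[RHS](card_imset _ (@Some_inj _)).
  apply: eq_card => o; apply/imsetP/imsetP.
  - case=> ed; rewrite !inE => /andP[/and3P[h1 _ h1'] hP] ->.
    have [e he hs] := hA _ h1 h1'.
    exists e; last by rewrite /phi he.
    by rewrite inE hs eqxx /=; move: hP; rewrite /= he.
  - case=> e; rewrite inE => /andP[/eqP hs hP] ->.
    have [y' [hy' _]] := Inv_edge hIc hs.
    have hvd : gread y (vlab e) != None by rewrite hy'.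
    pose ed0 : ved H := exist _ (inl (inl (e, y))) hvd.
    have hk0 : keep T sel ed0 by apply: hk; rewrite /= hs.
    pose ed : ved Hf := exist _ ed0 hk0.
    exists ed => //.
    rewrite inE; apply/andP; split => //.
    apply/and3P; split; rewrite ?inE //.
    by apply/eqP/val_inj => /=; rewrite hs.
have [hrr hKp hKm] := perm_K S1 n0 n1 hperm.
have [h3 h4] := hE34 c.
have [hp1 hp2] := principal_of_VLE hn h3 h4.
split; first by rewrite hrr hKp hKm.
by move=> l; rewrite hrr hKp hKm; apply: hp2.
Qed.
End LtoR.


Unset Implicit Arguments.

Theorem theorem5 (Sigma : finType) (S : seq Sigma -> Prop) (S1 : {set Sigma})
    (n0 n1 r : nat) :
  irreducible_constraint S ->
  S1 != set0 -> ~: S1 != set0 ->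
  0 < n0 -> 0 < n1 -> 0 < r ->
  (exists H : vlg Sigma, [/\ vdeterministic H, is_VLE S S1 n0 n1 H & max_len H r])
  <->
  (exists H : vlg Sigma,
     [/\ vdeterministic H, virreducible H, vpresents H S, max_len H r &
         exists V' : {set vst H}, principal_states S1 n0 n1 V']).
Proof.
move=> hS _ _ hn0 hn1 hr.
have hn : (0 < n0 + n1)%N by rewrite addn_gt0 hn0.
split.
- move=> [E [hEd hV hm]]; exact: (lhs_to_rhs hr hn hS hEd hV hm).
- move=> [H [hd _ hp hm [V' hV']]]; exact: (rhs_to_lhs hn0 hd hp hm hV').
Qed.
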